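(* Let $\mathbf m_1,\mathbf m_2,\mathbf m_3\in\mathbb R^3$ and $t_1,t_2,t_3,t_4\in\mathbb R$, and let $$\mathbf A_1=\begin{bmatrix}\mathbf m_1^T & t_1\\ \mathbf m_3^T & t_3\end{bmatrix},\qquad \mathbf A_2=\begin{bmatrix}\mathbf m_2^T & t_2\\ \mathbf m_3^T & t_4\end{bmatrix},$$ where $\mathbf m_1,\mathbf m_3$ are linearly independent and $\mathbf m_2,\mathbf m_3$ are linearly independent. Then there exist unique upper-triangular $2\times 2$ real matrices $\mathbf K_1,\mathbf K_2$ with positive diagonal entries, unique unit vectors $\mathbf r_1,\mathbf r_2,\mathbf r_3\in\mathbb R^3$ with $\mathbf r_3\cdot\mathbf r_1=\mathbf r_3\cdot\mathbf r_2=0$, and unique reals $t_1',t_2',t_3',t_4'$ such that $$\mathbf A_1=\mathbf K_1\begin{bmatrix}\mathbf r_1^T & t_1'\\ \mathbf r_3^T & t_3'\end{bmatrix},\qquad \mathbf A_2=\mathbf K_2\begin{bmatrix}\mathbf r_2^T & t_2'\\ \mathbf r_3^T & t_4'\end{bmatrix}.$$ Moreover, if in addition the null spaces of $\mathbf A_1$ and $\mathbf A_2$ (the two slits, viewed as lines in $\mathbb P^3$) are skew lines with finite points, then: the angle between the direction vectors $\mathbf r_1\times\mathbf r_3$ and $\mathbf r_2\times\mathbf r_3$ of the two slits is $\theta=\arccos(\mathbf r_1\cdot\mathbf r_2)$, and the euclidean distance between the two slits is $|t_4'-t_3'|$.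
   Context: A pair $(\mathbf A_1,\mathbf A_2)$ of $2\times 4$ matrices represents a two-slit camera $\mathbb P^3\dashrightarrow\mathbb P^2$, $\mathbf x\mapsto\big(\mathbf a_1^T\mathbf x/\mathbf a_2^T\mathbf x,\ \mathbf b_1^T\mathbf x/\mathbf b_2^T\mathbf x,\ 1\big)$, where $\mathbf a_1,\mathbf a_2$ are the rows of $\mathbf A_1$ and $\mathbf b_1,\mathbf b_2$ the rows of $\mathbf A_2$; its slits are the lines in $\mathbb P^3$ given by the null spaces of $\mathbf A_1$ and $\mathbf A_2$. A camera with matrices of the displayed form (sharing $\mathbf m_3$ in the second rows) is called a parallel two-slit camera. Points of $\mathbb R^3$ are identified with $(X_1,X_2,X_3,1)^T\in\mathbb P^3$ with the standard euclidean metric. *)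

(* Defs.v *)
From Stdlib Require Import Reals.
Open Scope R_scope.

Record vec3 := V3 { v1 : R; v2 : R; v3 : R }.

Definition vzero : vec3 := V3 0 0 0.
Definition vadd (u w : vec3) : vec3 := V3 (v1 u + v1 w) (v2 u + v2 w) (v3 u + v3 w).
Definition vscale (a : R) (u : vec3) : vec3 := V3 (a * v1 u) (a * v2 u) (a * v3 u).
Definition vsub (u w : vec3) : vec3 := vadd u (vscale (-1) w).
Definition dot (u w : vec3) : R := v1 u * v1 w + v2 u * v2 w + v3 u * v3 w.
Definition cross (u w : vec3) : vec3 :=
  V3 (v2 u * v3 w - v3 u * v2 w) (v3 u * v1 w - v1 u * v3 w) (v1 u * v2 w - v2 u * v1 w).
Definition vnorm (u : vec3) : R := sqrt (dot u u).

Definition lin_indep (u w : vec3) : Prop :=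
  forall a b : R, vadd (vscale a u) (vscale b w) = vzero -> a = 0 /\ b = 0.

Definition angle (u w : vec3) : R := acos (dot u w / (vnorm u * vnorm w)).

(* Points of R^4 (homogeneous coordinates of P^3): a vec3 part and a 4th coordinate. *)
Record vec4 := V4 { p3 : vec3; p4 : R }.

(* A 2x4 real matrix, given by its two rows; each row is [m^T t] with m in R^3. *)
Record mat24 := M24 { row1v : vec3; row1t : R; row2v : vec3; row2t : R }.

Definition mkA (m m3 : vec3) (t t' : R) : mat24 := M24 m t m3 t'.

Record mat22 := M22 { k11 : R; k12 : R; k21 : R; k22 : R }.

Definition upper_tri_posdiag (K : mat22) : Prop :=
  k21 K = 0 /\ 0 < k11 K /\ 0 < k22 K.

Definition mul22_24 (K : mat22) (M : mat24) : mat24 :=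
  M24 (vadd (vscale (k11 K) (row1v M)) (vscale (k12 K) (row2v M)))
      (k11 K * row1t M + k12 K * row2t M)
      (vadd (vscale (k21 K) (row1v M)) (vscale (k22 K) (row2v M)))
      (k21 K * row1t M + k22 K * row2t M).

Definition mat_apply (A : mat24) (x : vec4) : R * R :=
  (dot (row1v A) (p3 x) + row1t A * p4 x, dot (row2v A) (p3 x) + row2t A * p4 x).

(* Null space of A (the slit, as a line of P^3 = its set of nonzero representatives). *)
Definition in_null (A : mat24) (x : vec4) : Prop := mat_apply A x = (0, 0).

Definition v4nonzero (x : vec4) : Prop := p3 x <> vzero \/ p4 x <> 0.

(* The slits are skew lines of P^3: their null spaces meet only in 0. *)
Definition skew_slits (A1 A2 : mat24) : Prop :=
  forall x, in_null A1 x -> in_null A2 x -> ~ v4nonzero x.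

Definition has_finite_point (A : mat24) : Prop :=
  exists x, in_null A x /\ p4 x <> 0.

Definition on_slit (A : mat24) (X : vec3) : Prop := in_null A (V4 X 1).

Definition slit_distance (A1 A2 : mat24) (d : R) : Prop :=
  (forall X Y, on_slit A1 X -> on_slit A2 Y -> d <= vnorm (vsub X Y)) /\
  (forall e, (forall X Y, on_slit A1 X -> on_slit A2 Y -> e <= vnorm (vsub X Y)) -> e <= d).

Definition is_decomp (A1 A2 : mat24) (K1 K2 : mat22) (r1 r2 r3 : vec3)
    (t1' t2' t3' t4' : R) : Prop :=
  upper_tri_posdiag K1 /\ upper_tri_posdiag K2 /\
  vnorm r1 = 1 /\ vnorm r2 = 1 /\ vnorm r3 = 1 /\
  dot r3 r1 = 0 /\ dot r3 r2 = 0 /\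
  A1 = mul22_24 K1 (M24 r1 t1' r3 t3') /\
  A2 = mul22_24 K2 (M24 r2 t2' r3 t4').

(* Main.v *)
Require Import Defs.
From Stdlib Require Import Reals Lra.
Open Scope R_scope.
Lemma vec_ext u w : v1 u = v1 w -> v2 u = v2 w -> v3 u = v3 w -> u = w.
Proof. destruct u, w; simpl; intros; subst; reflexivity. Qed.
Lemma dot_add_l x y z : dot (vadd x y) z = dot x z + dot y z.
Proof. unfold dot, vadd; simpl; ring. Qed.
Lemma dot_add_r x y z : dot z (vadd x y) = dot z x + dot z y.
Proof. unfold dot, vadd; simpl; ring. Qed.
Lemma dot_scale_l k x z : dot (vscale k x) z = k * dot x z.
Proof. unfold dot, vscale; simpl; ring. Qed.
Lemma dot_scale_r k x z : dot z (vscale k x) = k * dot z x.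
Proof. unfold dot, vscale; simpl; ring. Qed.
Lemma dot_comm x y : dot x y = dot y x.
Proof. unfold dot; ring. Qed.
Lemma dot_nonneg u : 0 <= dot u u.
Proof. unfold dot; nra. Qed.
Lemma vnorm_eq u d : 0 <= d -> dot u u = d*d -> vnorm u = d.
Proof. intros Hd H; unfold vnorm; rewrite H; apply sqrt_square; auto. Qed.
Lemma vnorm1 u : vnorm u = 1 -> dot u u = 1.
Proof. unfold vnorm; intro H. rewrite <- (sqrt_sqrt (dot u u)) by apply dot_nonneg. rewrite H; ring. Qed.
Lemma dot_zero u : dot u u = 0 -> u = vzero.
Proof. destruct u as [x y z]; unfold dot; simpl; intro H. apply vec_ext; simpl; nra. Qed.
Lemma vnorm_pos u : u <> vzero -> 0 < vnorm u /\ vnorm u * vnorm u = dot u u.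
Proof. intro H. unfold vnorm. split.
 - apply sqrt_lt_R0. destruct (dot_nonneg u) as [h|h]; auto. exfalso; apply H, dot_zero; auto.
 - apply sqrt_sqrt, dot_nonneg. Qed.
Ltac dsimp := unfold vsub in *; repeat (rewrite ?dot_add_l, ?dot_add_r, ?dot_scale_l, ?dot_scale_r in *).

Definition r3c m3 := vscale (/ vnorm m3) m3.
Definition bc m m3 := dot m (r3c m3).
Definition wc m m3 := vsub m (vscale (bc m m3) (r3c m3)).
Definition r1c m m3 := vscale (/ vnorm (wc m m3)) (wc m m3).
Definition Kc m m3 := M22 (vnorm (wc m m3)) (bc m m3) 0 (vnorm m3).
Definition t3c m3 t3 := t3 / vnorm m3.
Definition t1c m m3 t t3 := (t - bc m m3 * t3c m3 t3) / vnorm (wc m m3).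

Lemma dec_unique m m3 t t3 K r r3 t' t3' :
  upper_tri_posdiag K -> dot r r = 1 -> dot r3 r3 = 1 -> dot r3 r = 0 ->
  M24 m t m3 t3 = mul22_24 K (M24 r t' r3 t3') ->
  K = Kc m m3 /\ r = r1c m m3 /\ r3 = r3c m3 /\ t' = t1c m m3 t t3 /\ t3' = t3c m3 t3.
Proof.
  destruct K as [a b c d]. unfold upper_tri_posdiag; simpl. intros [Hc [Ha Hd]] Hr Hr3 H0 H.
  subst c. unfold mul22_24 in H; simpl in H. injection H; intros; subst; clear H.
  assert (E3 : vnorm (vadd (vscale 0 r) (vscale d r3)) = d).
  { apply vnorm_eq; [lra|]. dsimp. rewrite (dot_comm r r3), H0, Hr3, Hr. ring. }
  assert (R3 : r3c (vadd (vscale 0 r) (vscale d r3)) = r3).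
  { unfold r3c; rewrite E3. apply vec_ext; simpl; field; lra. }
  assert (B : bc (vadd (vscale a r) (vscale b r3)) (vadd (vscale 0 r) (vscale d r3)) = b).
  { unfold bc; rewrite R3. dsimp. rewrite (dot_comm r r3), H0, Hr3. ring. }
  assert (W : wc (vadd (vscale a r) (vscale b r3)) (vadd (vscale 0 r) (vscale d r3)) = vscale a r).
  { unfold wc; rewrite B, R3. apply vec_ext; simpl; ring. }
  assert (EW : vnorm (vscale a r) = a).
  { apply vnorm_eq; [lra|]. dsimp. rewrite Hr. ring. }
  unfold Kc, r1c, t1c, t3c; rewrite W, EW, B, E3, R3.
  repeat split; try reflexivity.
  - apply vec_ext; simpl; field; lra.
  - field; lra.
  - field; lra.
Qed.

Lemma dec_exists m m3 t t3 : lin_indep m m3 ->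
  upper_tri_posdiag (Kc m m3) /\ vnorm (r1c m m3) = 1 /\ vnorm (r3c m3) = 1 /\
  dot (r3c m3) (r1c m m3) = 0 /\
  M24 m t m3 t3 = mul22_24 (Kc m m3) (M24 (r1c m m3) (t1c m m3 t t3) (r3c m3) (t3c m3 t3)).
Proof.
  intro Hl.
  assert (N3 : m3 <> vzero).
  { intro E. destruct (Hl 0 1) as [_ h]; [|lra]. subst m3. apply vec_ext; simpl; ring. }
  destruct (vnorm_pos _ N3) as [Hn Hnn].
  assert (R3 : dot (r3c m3) (r3c m3) = 1).
  { unfold r3c; dsimp. rewrite <- Hnn. field; lra. }
  assert (NW : wc m m3 <> vzero).
  { intro E. destruct (Hl 1 (- bc m m3 / vnorm m3)) as [h _]; [|lra].
    unfold wc, r3c, vsub in E. apply vec_ext; simpl.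
    - apply (f_equal v1) in E; simpl in E. rewrite <- E. field; lra.
    - apply (f_equal v2) in E; simpl in E. rewrite <- E. field; lra.
    - apply (f_equal v3) in E; simpl in E. rewrite <- E. field; lra. }
  destruct (vnorm_pos _ NW) as [Ha Haa].
  assert (D0 : dot (r3c m3) (wc m m3) = 0).
  { unfold wc at 1; dsimp. rewrite R3. unfold bc. rewrite dot_comm. ring. }
  unfold Kc, upper_tri_posdiag; simpl. repeat split; try lra.
  - apply vnorm_eq; [lra|]. unfold r1c; dsimp. rewrite <- Haa. field; lra.
  - apply vnorm_eq; [lra|]. rewrite R3; ring.
  - unfold r1c; dsimp. rewrite D0; ring.
  - unfold mul22_24; simpl. f_equal.
    + unfold r1c. set (a := vnorm (wc m m3)) in *. unfold wc, vsub. apply vec_ext; simpl; field; lra.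
    + unfold t1c, t3c. field; lra.
    + unfold r3c. apply vec_ext; simpl; field; lra.
    + unfold t3c. field; lra.
Qed.

Lemma null_char K r r3 t' t3' x : upper_tri_posdiag K ->
  (in_null (mul22_24 K (M24 r t' r3 t3')) x <->
   dot r (p3 x) + t' * p4 x = 0 /\ dot r3 (p3 x) + t3' * p4 x = 0).
Proof.
  destruct K as [a b c d]; unfold upper_tri_posdiag; simpl; intros [Hc [Ha Hd]]; subst c.
  unfold in_null, mat_apply, mul22_24; simpl. dsimp. split.
  - intro H; injection H; intros E2 E1.
    assert (dot r3 (p3 x) + t3' * p4 x = 0).
    { apply (Rmult_eq_reg_l d); [|lra]. rewrite Rmult_0_r, <- E2. ring. }
    split; auto.
    apply (Rmult_eq_reg_l a); [|lra]. rewrite Rmult_0_r, <- E1. nra.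
  - intros [E1 E2]. f_equal.
    + transitivity (a * (dot r (p3 x) + t' * p4 x) + b * (dot r3 (p3 x) + t3' * p4 x)); [ring|].
      rewrite E1, E2; ring.
    + transitivity (0 * (dot r (p3 x) + t' * p4 x) + d * (dot r3 (p3 x) + t3' * p4 x)); [ring|].
      rewrite E1, E2; ring.
Qed.

Lemma lagrange u w : dot (cross u w) (cross u w) = dot u u * dot w w - dot u w * dot u w.
Proof. unfold dot, cross; simpl; ring. Qed.
Lemma binet a b c : dot (cross a c) (cross b c) = dot a b * dot c c - dot a c * dot b c.
Proof. unfold dot, cross; simpl; ring. Qed.

Lemma cs u r : dot r r = 1 -> Rabs (dot u r) <= vnorm u.
Proof.
  intro H. unfold vnorm. rewrite <- sqrt_Rsqr_abs. apply sqrt_le_1_alt.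
  unfold Rsqr. pose proof (lagrange u r). pose proof (dot_nonneg (cross u r)).
  rewrite H in *. nra.
Qed.

Lemma geom A1 A2 K1 K2 r1 r2 r3 t1' t2' t3' t4' :
  is_decomp A1 A2 K1 K2 r1 r2 r3 t1' t2' t3' t4' ->
  skew_slits A1 A2 ->
  angle (cross r1 r3) (cross r2 r3) = acos (dot r1 r2) /\
  slit_distance A1 A2 (Rabs (t4' - t3')).
Proof.
  intros [HK1 [HK2 [N1 [N2 [N3 [D1 [D2 [E1 E2]]]]]]]] Hs.
  apply vnorm1 in N1, N2, N3. subst A1 A2.
  split.
  - unfold angle.
    assert (U1 : vnorm (cross r1 r3) = 1).
    { apply vnorm_eq; [lra|]. rewrite lagrange, N1, N3, (dot_comm r1 r3), D1. ring. }
    assert (U2 : vnorm (cross r2 r3) = 1).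
    { apply vnorm_eq; [lra|]. rewrite lagrange, N2, N3, (dot_comm r2 r3), D2. ring. }
    rewrite U1, U2, binet, N3, (dot_comm r1 r3), D1. f_equal. field.
  - set (D := dot r1 (cross r2 r3)).
    assert (HD : D <> 0).
    { intro HD0. apply (Hs (V4 (cross r1 r3) 0)).
      - apply null_char; auto; simpl. unfold dot, cross; simpl; split; ring.
      - apply null_char; auto; simpl. split.
        + transitivity (- D); [unfold D, dot, cross; simpl; ring| rewrite HD0; ring].
        + unfold dot, cross; simpl; ring.
      - left; simpl. intro E. assert (dot (cross r1 r3) (cross r1 r3) = 0) by (rewrite E; unfold dot; simpl; ring).
        rewrite lagrange, N1, N3, (dot_comm r1 r3), D1 in H. lra. }
    unfold slit_distance, on_slit. split.
    + intros X Y H1 H2. apply null_char in H1, H2; auto. simpl in *.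
      replace (t4' - t3') with (dot (vsub X Y) r3).
      * apply cs; auto.
      * unfold vsub; dsimp. rewrite (dot_comm X r3), (dot_comm Y r3). lra.
    + intros e He. set (s := t4' - t3').
      set (X := vscale (/ D) (vadd (vscale (- t1') (cross r2 r3))
                 (vadd (vscale (- t2') (cross r3 r1)) (vscale (- t3') (cross r1 r2))))).
      set (Y := vsub X (vscale s r3)).
      assert (HX1 : dot r1 X = - t1').
      { unfold X, D in *. unfold dot, cross, vscale, vadd in *; simpl in *. field; auto. }
      assert (HX2 : dot r2 X = - t2').
      { unfold X, D in *. unfold dot, cross, vscale, vadd in *; simpl in *. field; auto. }
      assert (HX3 : dot r3 X = - t3').
      { unfold X, D in *. unfold dot, cross, vscale, vadd in *; simpl in *. field; auto. }
      specialize (He X Y).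
      replace (vnorm (vsub X Y)) with (Rabs s) in He.
      * apply He.
        -- apply null_char; auto; simpl. lra.
        -- apply null_char; auto; simpl. unfold Y, vsub; dsimp.
           rewrite HX2, HX3, (dot_comm r2 r3), D2, N3. unfold s; split; ring.
      * symmetry. unfold vnorm. rewrite <- sqrt_Rsqr_abs. f_equal.
        unfold Y, vsub; dsimp. rewrite N3. unfold Rsqr. ring.
Qed.

Theorem mainTheorem2 (m1 m2 m3 : vec3) (t1 t2 t3 t4 : R)
  (h13 : lin_indep m1 m3) (h23 : lin_indep m2 m3) :
  let A1 := mkA m1 m3 t1 t3 in
  let A2 := mkA m2 m3 t2 t4 in
  (* existence and uniqueness of the decomposition *)
  (exists K1 K2 r1 r2 r3 t1' t2' t3' t4',
     is_decomp A1 A2 K1 K2 r1 r2 r3 t1' t2' t3' t4' /\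
     forall K1b K2b r1b r2b r3b t1b t2b t3b t4b,
       is_decomp A1 A2 K1b K2b r1b r2b r3b t1b t2b t3b t4b ->
       K1b = K1 /\ K2b = K2 /\ r1b = r1 /\ r2b = r2 /\ r3b = r3 /\
       t1b = t1' /\ t2b = t2' /\ t3b = t3' /\ t4b = t4') /\
  (* geometric meaning, for skew slits with finite points *)
  (forall K1 K2 r1 r2 r3 t1' t2' t3' t4',
     is_decomp A1 A2 K1 K2 r1 r2 r3 t1' t2' t3' t4' ->
     skew_slits A1 A2 -> has_finite_point A1 -> has_finite_point A2 ->
     angle (cross r1 r3) (cross r2 r3) = acos (dot r1 r2) /\
     slit_distance A1 A2 (Rabs (t4' - t3'))).
Proof.
  intros A1 A2. split.
  - destruct (dec_exists m1 m3 t1 t3 h13) as [K1p [N1 [N3 [D1 E1]]]].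
    destruct (dec_exists m2 m3 t2 t4 h23) as [K2p [N2 [_ [D2 E2]]]].
    exists (Kc m1 m3), (Kc m2 m3), (r1c m1 m3), (r1c m2 m3), (r3c m3),
      (t1c m1 m3 t1 t3), (t1c m2 m3 t2 t4), (t3c m3 t3), (t3c m3 t4).
    split.
    + unfold is_decomp; unfold is_decomp, upper_tri_posdiag in *; repeat split; tauto.
    + intros K1b K2b r1b r2b r3b t1b t2b t3b t4b
        [HK1 [HK2 [M1 [M2 [M3 [F1 [F2 [G1 G2]]]]]]]].
      apply vnorm1 in M1, M2, M3.
      destruct (dec_unique m1 m3 t1 t3 K1b r1b r3b t1b t3b HK1 M1 M3 F1 G1)
        as [a1 [b1 [c1 [d1 e1]]]].
      destruct (dec_unique m2 m3 t2 t4 K2b r2b r3b t2b t4b HK2 M2 M3 F2 G2)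
        as [a2 [b2 [c2 [d2 e2]]]].
      repeat split; auto.
  - intros K1 K2 r1 r2 r3 t1' t2' t3' t4' H Hs _ _. exact (geom _ _ _ _ _ _ _ _ _ _ _ H Hs).
Qed.
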